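(* Let $\mathcal{C}$ be a deflation-exact category and $\mathcal{A}\subseteq\mathcal{C}$ an admissibly deflation-percolating subcategory. Let $a\colon U\rightarrowtail V$ be an $\mathcal{A}^{-1}$-inflation and $b\colon V\twoheadrightarrow W$ an $\mathcal{A}^{-1}$-deflation. Then $b\circ a$ is an admissible morphism whose kernel and cokernel lie in $\mathcal{A}$.
   Context: A conflation category is an additive category with a class of kernel-cokernel pairs (closed under isomorphisms) called conflations; first map an inflation, second a deflation. A deflation-exact category is a conflation category satisfying: (R0) $1_0$ is a deflation; (R1) composites of deflations are deflations; (R2) pullbacks of deflations along arbitrary morphisms exist and are deflations. A morphism is admissible if it factors as a deflation followed by an inflation. A non-empty full subcategory $\mathcal{A}$ is admissibly deflation-percolating if: (A1) for every conflation $A'\rightarrowtail A\twoheadrightarrow A''$, $A\in\mathcal{A}$ iff $A',A''\in\mathcal{A}$; (A2) every morphism $C\to A$ with $A\in\mathcal{A}$ factors as a deflation $C\twoheadrightarrow A'$ followed by an inflation $A'\rightarrowtail A$ with $A'\in\mathcal{A}$; (A3) if $a\colon C\rightarrowtail D$ is an inflation and $b\colon C\twoheadrightarrow A$ a deflation with $A\in\mathcal{A}$, the pushout of $a$ along $b$ exists and yields a deflation $D\twoheadrightarrow P$ and an inflation $A\rightarrowtail P$. An $\mathcal{A}^{-1}$-inflation is an inflation with cokernel in $\mathcal{A}$; an $\mathcal{A}^{-1}$-deflation is a deflation with kernel in $\mathcal{A}$. *)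

(* Defs.v *)
Set Implicit Arguments.
Unset Strict Implicit.

Record AddCat := {
  Ob : Type;
  Hom : Ob -> Ob -> Type;
  comp : forall A B C : Ob, Hom B C -> Hom A B -> Hom A C;
  idm : forall A : Ob, Hom A A;
  hadd : forall A B : Ob, Hom A B -> Hom A B -> Hom A B;
  hzero : forall A B : Ob, Hom A B;
  hopp : forall A B : Ob, Hom A B -> Hom A B;
  comp_assoc : forall A B C D (h : Hom C D) (g : Hom B C) (f : Hom A B),
      comp h (comp g f) = comp (comp h g) f;
  comp_id_l : forall A B (f : Hom A B), comp (idm B) f = f;
  comp_id_r : forall A B (f : Hom A B), comp f (idm A) = f;
  hadd_assoc : forall A B (f g h : Hom A B), hadd f (hadd g h) = hadd (hadd f g) h;
  hadd_comm : forall A B (f g : Hom A B), hadd f g = hadd g f;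
  hadd_0 : forall A B (f : Hom A B), hadd f (hzero A B) = f;
  hadd_opp : forall A B (f : Hom A B), hadd f (hopp f) = hzero A B;
  comp_hadd_l : forall A B C (g : Hom B C) (f1 f2 : Hom A B),
      comp g (hadd f1 f2) = hadd (comp g f1) (comp g f2);
  comp_hadd_r : forall A B C (g1 g2 : Hom B C) (f : Hom A B),
      comp (hadd g1 g2) f = hadd (comp g1 f) (comp g2 f);
  zob : Ob;
  zob_terminal : forall A (f g : Hom A zob), f = g;
  zob_initial : forall A (f g : Hom zob A), f = g;
  biproducts : forall A B : Ob, exists (P : Ob) (i1 : Hom A P) (i2 : Hom B P)
      (p1 : Hom P A) (p2 : Hom P B),
      comp p1 i1 = idm A /\ comp p2 i2 = idm B /\
      comp p1 i2 = hzero B A /\ comp p2 i1 = hzero A B /\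
      hadd (comp i1 p1) (comp i2 p2) = idm P
}.

Arguments comp {a A B C} _ _.
Arguments idm {a} A.
Arguments hzero {a} A B.
Arguments zob {a}.
Arguments Hom : clear implicits.
Arguments Ob : clear implicits.

Section Basic.
Variable C : AddCat.

Definition is_iso (A B : Ob C) (f : Hom C A B) : Prop :=
  exists g : Hom C B A, comp g f = idm A /\ comp f g = idm B.

Definition is_kernel (K A B : Ob C) (k : Hom C K A) (f : Hom C A B) : Prop :=
  comp f k = hzero K B /\
  forall X (x : Hom C X A), comp f x = hzero X B ->
    exists! y : Hom C X K, comp k y = x.

Definition is_cokernel (A B Q : Ob C) (f : Hom C A B) (c : Hom C B Q) : Prop :=
  comp c f = hzero A Q /\
  forall X (x : Hom C B X), comp x f = hzero A X ->
    exists! y : Hom C Q X, comp y c = x.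

Definition kernel_cokernel_pair (A B D : Ob C) (f : Hom C A B) (g : Hom C B D) : Prop :=
  is_kernel f g /\ is_cokernel f g.

(* Pullback square:  P --p--> X
                     |q       |h
                     v        v
                     Y --g--> Z        *)
Definition is_pullback (P X Y Z : Ob C) (p : Hom C P X) (q : Hom C P Y)
    (h : Hom C X Z) (g : Hom C Y Z) : Prop :=
  comp h p = comp g q /\
  forall T (u : Hom C T X) (v : Hom C T Y), comp h u = comp g v ->
    exists! w : Hom C T P, comp p w = u /\ comp q w = v.

(* Pushout square:  X --a--> Y
                    |b       |b'
                    v        v
                    Z --a'-> P          *)
Definition is_pushout (X Y Z P : Ob C) (a : Hom C X Y) (b : Hom C X Z)
    (b' : Hom C Y P) (a' : Hom C Z P) : Prop :=
  comp b' a = comp a' b /\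
  forall T (u : Hom C Y T) (v : Hom C Z T), comp u a = comp v b ->
    exists! w : Hom C P T, comp w b' = u /\ comp w a' = v.
End Basic.

Record ConfCat := {
  ccat :> AddCat;
  Conf : forall A B D : Ob ccat, Hom ccat A B -> Hom ccat B D -> Prop;
  conf_kc : forall A B D (f : Hom ccat A B) (g : Hom ccat B D),
      Conf f g -> kernel_cokernel_pair f g;
  conf_iso : forall A B D A' B' D' (f : Hom ccat A B) (g : Hom ccat B D)
      (f' : Hom ccat A' B') (g' : Hom ccat B' D')
      (u : Hom ccat A A') (v : Hom ccat B B') (w : Hom ccat D D'),
      Conf f g -> is_iso u -> is_iso v -> is_iso w ->
      comp v f = comp f' u -> comp w g = comp g' v -> Conf f' g'
}.

Section Conflations.
Variable C : ConfCat.

Definition inflation (A B : Ob C) (f : Hom C A B) : Prop :=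
  exists (D : Ob C) (g : Hom C B D), Conf f g.

Definition deflation (B D : Ob C) (g : Hom C B D) : Prop :=
  exists (A : Ob C) (f : Hom C A B), Conf f g.

Definition admissible (A B : Ob C) (f : Hom C A B) : Prop :=
  exists (I : Ob C) (d : Hom C A I) (i : Hom C I B),
    deflation d /\ inflation i /\ f = comp i d.

Definition deflation_exact : Prop :=
  deflation (idm (@zob C)) /\
  (forall A B D (f : Hom C A B) (g : Hom C B D),
               deflation f -> deflation g -> deflation (comp g f)) /\
  (forall X Y Z (g : Hom C Y Z) (h : Hom C X Z), deflation g ->
               exists (P : Ob C) (p : Hom C P X) (q : Hom C P Y),
                 is_pullback p q h g /\ deflation p).

Section Percolating.
Variable Acl : Ob C -> Prop.

Definition admissibly_deflation_percolating : Prop :=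
  (exists A : Ob C, Acl A) /\
  (* A1 *) (forall A' A A'' (f : Hom C A' A) (g : Hom C A A''),
               Conf f g -> (Acl A <-> Acl A' /\ Acl A'')) /\
  (* A2 *) (forall (X A : Ob C) (f : Hom C X A), Acl A ->
               exists (A' : Ob C) (d : Hom C X A') (i : Hom C A' A),
                 deflation d /\ inflation i /\ Acl A' /\ f = comp i d) /\
  (* A3 *) (forall (X D A : Ob C) (a : Hom C X D) (b : Hom C X A),
               inflation a -> deflation b -> Acl A ->
               exists (P : Ob C) (b' : Hom C D P) (a' : Hom C A P),
                 is_pushout a b b' a' /\ deflation b' /\ inflation a').

Definition Ainv_inflation (U V : Ob C) (a : Hom C U V) : Prop :=
  exists (Q : Ob C) (g : Hom C V Q), Conf a g /\ Acl Q.

Definition Ainv_deflation (V W : Ob C) (b : Hom C V W) : Prop :=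
  exists (K : Ob C) (f : Hom C K V), Conf f b /\ Acl K.
End Percolating.
End Conflations.

(* Main.v *)
Require Import Defs.

Notation "g ∘ f" := (comp g f) (at level 40, left associativity).

Section Gen.
Variable C : AddCat.

Lemma zero_l (A B : Ob C) (x : Hom C A B) : hadd (hzero A B) x = x.
Proof. rewrite hadd_comm; apply hadd_0. Qed.

Lemma idem_zero (A B : Ob C) (x : Hom C A B) : hadd x x = x -> x = hzero A B.
Proof.
  intro H. rewrite <- (hadd_opp x).
  transitivity (hadd (hadd x x) (hopp x)).
  - rewrite <- hadd_assoc, hadd_opp, hadd_0. reflexivity.
  - rewrite H. reflexivity.
Qed.

Lemma comp_0_r (A B D : Ob C) (f : Hom C B D) : f ∘ hzero A B = hzero A D.
Proof.
  apply idem_zero. rewrite <- comp_hadd_l, hadd_0. reflexivity.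
Qed.

Lemma comp_0_l (A B D : Ob C) (f : Hom C A B) : hzero B D ∘ f = hzero A D.
Proof.
  apply idem_zero. rewrite <- comp_hadd_r, hadd_0. reflexivity.
Qed.

Lemma inv_unique (A B : Ob C) (x y : Hom C A B) : hadd x y = hzero A B -> y = hopp x.
Proof.
  intro H. rewrite <- (hadd_0 y), <- (hadd_opp x), hadd_assoc, (hadd_comm y x), H.
  apply zero_l.
Qed.

Lemma comp_opp_r (A B D : Ob C) (g : Hom C B D) (f : Hom C A B) :
  g ∘ hopp f = hopp (g ∘ f).
Proof.
  apply inv_unique. rewrite <- comp_hadd_l, hadd_opp. apply comp_0_r.
Qed.

Lemma opp_0 (A B : Ob C) : hopp (hzero A B) = hzero A B.
Proof. symmetry; apply inv_unique. apply hadd_0. Qed.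

Lemma sub_zero_eq (A B : Ob C) (v v' : Hom C A B) : hadd v (hopp v') = hzero A B -> v = v'.
Proof.
  intro H. rewrite hadd_comm in H. apply inv_unique in H.
  assert (H2 : hadd (hopp v') v' = hzero A B) by (rewrite hadd_comm; apply hadd_opp).
  apply inv_unique in H2. congruence.
Qed.

Lemma kernel_mono (K A B : Ob C) (k : Hom C K A) (f : Hom C A B) :
  is_kernel k f -> forall T (x y : Hom C T K), k ∘ x = k ∘ y -> x = y.
Proof.
  intros [H0 H] T x y E.
  destruct (H T (k ∘ x)) as [z [_ Hz]].
  - rewrite comp_assoc, H0. apply comp_0_l.
  - rewrite <- (Hz x eq_refl). apply Hz. symmetry; exact E.
Qed.

Lemma cokernel_epi (A B Q : Ob C) (f : Hom C A B) (c : Hom C B Q) :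
  is_cokernel f c -> forall T (x y : Hom C Q T), x ∘ c = y ∘ c -> x = y.
Proof.
  intros [H0 H] T x y E.
  destruct (H T (x ∘ c)) as [z [_ Hz]].
  - rewrite <- comp_assoc, H0. apply comp_0_r.
  - rewrite <- (Hz x eq_refl). apply Hz. symmetry; exact E.
Qed.

Lemma pullback_unique (P P' X Y Z : Ob C) (p : Hom C P X) (q : Hom C P Y)
  (p' : Hom C P' X) (q' : Hom C P' Y) (h : Hom C X Z) (g : Hom C Y Z) :
  is_pullback p q h g -> is_pullback p' q' h g ->
  exists phi : Hom C P' P, p ∘ phi = p' /\ is_iso phi.
Proof.
  intros [E H] [E' H'].
  destruct (H P' p' q' E') as [phi [[F1 F2] _]].
  destruct (H' P p q E) as [psi [[G1 G2] _]].
  exists phi. split; [exact F1|]. exists psi. split.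
  - destruct (H' P' p' q' E') as [w [_ Hw]].
    transitivity w; [symmetry|]; apply Hw.
    + rewrite comp_assoc, G1, F1, comp_assoc, G2, F2; split; reflexivity.
    + rewrite !comp_id_r; split; reflexivity.
  - destruct (H P p q E) as [w [_ Hw]].
    transitivity w; [symmetry|]; apply Hw.
    + rewrite comp_assoc, F1, G1, comp_assoc, F2, G2; split; reflexivity.
    + rewrite !comp_id_r; split; reflexivity.
Qed.

Lemma kernel_unique (K K' A B : Ob C) (k : Hom C K A) (k' : Hom C K' A) (f : Hom C A B) :
  is_kernel k f -> is_kernel k' f -> exists u : Hom C K' K, k ∘ u = k' /\ is_iso u.
Proof.
  intros Hk Hk'. destruct Hk as [E H], Hk' as [E' H'].
  destruct (H K' k' E') as [u [F _]].
  destruct (H' K k E) as [v [G _]].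
  exists u. split; [exact F|]. exists v. split.
  - eapply kernel_mono; [exact (conj E' H')|]. rewrite comp_assoc, G, F, comp_id_r. reflexivity.
  - eapply kernel_mono; [exact (conj E H)|]. rewrite comp_assoc, F, G, comp_id_r. reflexivity.
Qed.
End Gen.

Section Conf.
Variable C : ConfCat.

Lemma conf_mono (A B D : Ob C) (f : Hom C A B) (g : Hom C B D) :
  Conf f g -> forall T (x y : Hom C T A), f ∘ x = f ∘ y -> x = y.
Proof. intro H. destruct (conf_kc H) as [Hk _]. eapply kernel_mono; exact Hk. Qed.

Lemma conf_epi (A B D : Ob C) (f : Hom C A B) (g : Hom C B D) :
  Conf f g -> forall T (x y : Hom C D T), x ∘ g = y ∘ g -> x = y.
Proof. intro H. destruct (conf_kc H) as [_ Hc]. eapply cokernel_epi; exact Hc. Qed.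

Lemma defl_iso (P0 P X : Ob C) (p : Hom C P0 X) (phi : Hom C P P0) :
  deflation p -> is_iso phi -> deflation (p ∘ phi).
Proof.
  intros [A [x Hx]] [psi [E1 E2]].
  exists A, (psi ∘ x).
  eapply (conf_iso (u := idm A) (v := psi) (w := idm X) Hx).
  - exists (idm A); split; apply comp_id_l.
  - exists phi; split; assumption.
  - exists (idm X); split; apply comp_id_l.
  - rewrite comp_id_r; reflexivity.
  - rewrite comp_id_l, <- comp_assoc, E2, comp_id_r; reflexivity.
Qed.

Lemma infl_iso (J0 J W D : Ob C) (j : Hom C J0 W) (h : Hom C W D) (u : Hom C J J0) :
  Conf j h -> is_iso u -> Conf (j ∘ u) h.
Proof.
  intros Hx [v [E1 E2]].
  eapply (conf_iso (u := v) (v := idm W) (w := idm D) Hx).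
  - exists u; split; assumption.
  - exists (idm W); split; apply comp_id_l.
  - exists (idm D); split; apply comp_id_l.
  - rewrite comp_id_l, <- comp_assoc, E2, comp_id_r; reflexivity.
  - rewrite comp_id_l, comp_id_r; reflexivity.
Qed.

Lemma epi_defl (Acl : Ob C -> Prop) (HA : admissibly_deflation_percolating Acl)
  (X A : Ob C) (f : Hom C X A) : Acl A ->
  (forall T (x y : Hom C A T), x ∘ f = y ∘ f -> x = y) -> deflation f.
Proof.
  intros AA Hepi. destruct HA as [_ [_ [A2 _]]].
  destruct (A2 X A f AA) as [A' [d [i [[Z [z Hz]] [[D [c Hc]] [_ E]]]]]].
  assert (Hiepi : forall T (x y : Hom C A T), x ∘ i = y ∘ i -> x = y).
  { intros T x y Exy. apply Hepi. rewrite E, !comp_assoc, Exy. reflexivity. }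
  assert (Hc0 : c = hzero A D).
  { apply Hiepi. rewrite comp_0_l. destruct (conf_kc Hc) as [_ [H0 _]]. exact H0. }
  destruct (conf_kc Hc) as [[_ Hk] _].
  destruct (Hk A (idm A)) as [y [Ey _]].
  { rewrite Hc0. apply comp_0_l. }
  exists Z, z.
  eapply (conf_iso (u := idm Z) (v := idm X) (w := i) Hz).
  - exists (idm Z); split; apply comp_id_l.
  - exists (idm X); split; apply comp_id_l.
  - exists y; split; [|exact Ey].
    eapply conf_mono; [exact Hc|]. rewrite comp_assoc, Ey, comp_id_l, comp_id_r. reflexivity.
  - rewrite comp_id_l, comp_id_r; reflexivity.
  - rewrite comp_id_r; symmetry; exact E.
Qed.
End Conf.

Theorem mainTheorem10 (C : ConfCat) (Acl : Ob C -> Prop)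
  (HC : deflation_exact C)
  (HA : admissibly_deflation_percolating Acl)
  (U V W : Ob C) (a : Hom C U V) (b : Hom C V W)
  (Ha : Ainv_inflation Acl a) (Hb : Ainv_deflation Acl b) :
  admissible (comp b a) /\
  (exists (K : Ob C) (k : Hom C K U), is_kernel k (comp b a) /\ Acl K) /\
  (exists (Q : Ob C) (c : Hom C W Q), is_cokernel (comp b a) c /\ Acl Q).
Proof.
  pose proof HA as HA'.
  destruct HC as [_ [R1 R2]].
  destruct HA as [_ [A1 [A2 A3]]].
  destruct Ha as [Q [g [Cag AQ]]].
  destruct Hb as [K [f [Cfb AK]]].
  destruct (conf_kc Cag) as [[Ea Ka] [_ Cg]].
  destruct (conf_kc Cfb) as [[Ef Kf] [_ Cb]].
  destruct (A2 K Q (g ∘ f) AQ) as [A' [d [i [dd [ii [AA' Egf]]]]]].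
  destruct dd as [K'' [k'' Ckd]].
  destruct ii as [Q'' [c Cic]].
  destruct (conf_kc Ckd) as [[Ek Kk] [_ Cd]].
  destruct (conf_kc Cic) as [[Ei Ki] [_ Cc]].
  assert (AK'' : Acl K'') by (apply (A1 _ _ _ _ _ Ckd); exact AK).
  assert (AQ'' : Acl Q'') by (apply (A1 _ _ _ _ _ Cic); exact AQ).
  assert (mono_a : forall T (x y : Hom C T U), a ∘ x = a ∘ y -> x = y)
    by (eapply conf_mono; exact Cag).
  assert (mono_f : forall T (x y : Hom C T K), f ∘ x = f ∘ y -> x = y)
    by (eapply conf_mono; exact Cfb).
  assert (mono_k : forall T (x y : Hom C T K''), k'' ∘ x = k'' ∘ y -> x = y)
    by (eapply conf_mono; exact Ckd).
  assert (mono_i : forall T (x y : Hom C T A'), i ∘ x = i ∘ y -> x = y)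
    by (eapply conf_mono; exact Cic).
  assert (epi_g : forall T (x y : Hom C Q T), x ∘ g = y ∘ g -> x = y)
    by (eapply conf_epi; exact Cag).
  assert (epi_b : forall T (x y : Hom C W T), x ∘ b = y ∘ b -> x = y)
    by (eapply conf_epi; exact Cfb).
  assert (epi_d : forall T (x y : Hom C A' T), x ∘ d = y ∘ d -> x = y)
    by (eapply conf_epi; exact Ckd).
  assert (epi_c : forall T (x y : Hom C Q'' T), x ∘ c = y ∘ c -> x = y)
    by (eapply conf_epi; exact Cic).
  destruct (Ka K'' (f ∘ k'')) as [kU [EkU _]].
  { rewrite comp_assoc, Egf, <- comp_assoc, Ek. apply comp_0_r. }
  destruct (Cb Q'' (c ∘ g)) as [h [Eh _]].
  { rewrite <- comp_assoc, Egf, comp_assoc, Ei. apply comp_0_l. }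
  destruct (A3 K V A' f d (ex_intro _ W (ex_intro _ b Cfb))
              (ex_intro _ K'' (ex_intro _ k'' Ckd)) AA')
    as [P [b' [a' [[Epo Hpo] [db' ia']]]]].
  destruct (Hpo Q g i Egf) as [t [[Etb Eta] _]].
  destruct (Hpo W b (hzero A' W)) as [s [[Esb Esa] _]].
  { rewrite Ef, comp_0_l. reflexivity. }
  assert (epi_b' : forall T (x y : Hom C P T), x ∘ b' = y ∘ b' -> x = y).
  { destruct db' as [Z [z Hz]]. eapply conf_epi; exact Hz. }
  assert (dt : deflation t).
  { eapply epi_defl; [exact HA'|exact AQ|]. intros T x y Exy. apply epi_g.
    rewrite <- Etb, !comp_assoc, Exy. reflexivity. }
  destruct dt as [J' [j' Cjt]].
  destruct (conf_kc Cjt) as [[Ej Kj] _].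
  assert (mono_j : forall T (x y : Hom C T J'), j' ∘ x = j' ∘ y -> x = y)
    by (eapply conf_mono; exact Cjt).
  destruct (Kj U (b' ∘ a)) as [e [Ee _]].
  { rewrite comp_assoc, Etb, Ea. reflexivity. }
  assert (PBe : is_pullback e a j' b').
  { split; [exact Ee|]. intros T u v Euv.
    destruct (Ka T v) as [w [Ew _]].
    { rewrite <- Etb, <- comp_assoc, <- Euv, comp_assoc, Ej. apply comp_0_l. }
    exists w. split; [split; [|exact Ew]|].
    - apply mono_j. rewrite comp_assoc, Ee, <- comp_assoc, Ew. symmetry; exact Euv.
    - intros w' [_ Ew']. apply mono_a. rewrite Ew, Ew'. reflexivity. }
  destruct (R2 J' V P b' j' db') as [P0 [p0 [q0 [PB0 dp0]]]].
  destruct (pullback_unique _ _ _ _ _ _ _ _ _ _ _ _ PB0 PBe) as [phi [Ephi Iphi]].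
  assert (de : deflation e) by (rewrite <- Ephi; apply defl_iso; assumption).
  assert (dh : deflation h).
  { eapply epi_defl; [exact HA'|exact AQ''|]. intros T x y Exy. apply epi_c, epi_g.
    rewrite <- !comp_assoc, <- Eh, !comp_assoc, Exy. reflexivity. }
  destruct dh as [J0 [j0 Cjh]].
  destruct (conf_kc Cjh) as [Kjh _].
  assert (Ehs : h ∘ s = c ∘ t).
  { apply epi_b'. rewrite <- !comp_assoc, Esb, Etb. exact Eh. }
  assert (zm : forall T (v : Hom C T J'), s ∘ j' ∘ v = hzero T W -> v = hzero T J').
  { intros T v Hv.
    destruct (R2 T U J' e v de) as [T1 [pi [v1 [[Epb _] dpi]]]].
    destruct (Kf T1 (a ∘ v1)) as [k1 [Ek1 _]].
    { rewrite <- Esb, <- !comp_assoc, (comp_assoc b' a), <- Ee, <- comp_assoc, <- Epb.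
      rewrite !comp_assoc, Hv. apply comp_0_l. }
    destruct (Kk T1 k1) as [m [Em _]].
    { apply mono_i. rewrite comp_0_r, comp_assoc, <- Egf, <- comp_assoc, Ek1,
        comp_assoc, Ea. apply comp_0_l. }
    assert (E1 : e ∘ v1 = hzero T1 J').
    { apply mono_j. rewrite comp_0_r, comp_assoc, Ee, <- comp_assoc, <- Ek1, <- Em,
        comp_assoc, Epo, !comp_assoc, <- (comp_assoc a' d k''), Ek, comp_0_r.
      apply comp_0_l. }
    destruct dpi as [Z [z Hz]].
    eapply conf_epi; [exact Hz|]. rewrite Epb, E1, comp_0_l. reflexivity. }
  assert (mono_sj : forall T (v v' : Hom C T J'), s ∘ j' ∘ v = s ∘ j' ∘ v' -> v = v').
  { intros T v v' E. apply sub_zero_eq, zm.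
    rewrite comp_hadd_l, comp_opp_r, E. apply hadd_opp. }
  assert (Ksj : is_kernel (s ∘ j') h).
  { split.
    - rewrite comp_assoc, Ehs, <- comp_assoc, Ej. apply comp_0_r.
    - intros X x Hx.
      destruct (R2 X V W b x (ex_intro _ K (ex_intro _ f Cfb)))
        as [X1 [pi [x1 [[Epb _] dpi]]]].
      destruct (Ki X1 (g ∘ x1)) as [y [Ey _]].
      { rewrite comp_assoc, <- Eh, <- comp_assoc, <- Epb, comp_assoc, Hx. apply comp_0_l. }
      destruct (Kj X1 (hadd (b' ∘ x1) (hopp (a' ∘ y)))) as [z [Ez _]].
      { rewrite comp_hadd_l, comp_opp_r, !comp_assoc, Etb, Eta, Ey. apply hadd_opp. }
      assert (Esz : s ∘ j' ∘ z = x ∘ pi).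
      { rewrite <- comp_assoc, Ez, comp_hadd_l, comp_opp_r, !comp_assoc, Esb, Esa,
          comp_0_l, opp_0, hadd_0. symmetry; exact Epb. }
      destruct dpi as [Z [kap Hk]].
      destruct (conf_kc Hk) as [[Ekap _] [_ Cpi]].
      destruct (Cpi J' z) as [w [Ew _]].
      { apply zm. rewrite comp_assoc, Esz, <- comp_assoc, Ekap. apply comp_0_r. }
      exists w. split.
      + eapply conf_epi; [exact Hk|]. rewrite <- comp_assoc, Ew. exact Esz.
      + intros w' Ew'. apply mono_sj. rewrite Ew'.
        eapply conf_epi; [exact Hk|]. rewrite <- comp_assoc, Ew. exact Esz. }
  destruct (kernel_unique _ _ _ _ _ _ _ _ Kjh Ksj) as [u [Eu Iu]].
  assert (Cfin : Conf (s ∘ j') h) by (rewrite <- Eu; apply infl_iso; assumption).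
  split; [|split].
  - exists J', e, (s ∘ j'). split; [exact de|]. split; [exists Q'', h; exact Cfin|].
    rewrite <- comp_assoc, Ee, comp_assoc, Esb. reflexivity.
  - exists K'', kU. split; [|exact AK''].
    split.
    + rewrite <- comp_assoc, EkU, comp_assoc, Ef. apply comp_0_l.
    + intros X x Hx.
      destruct (Kf X (a ∘ x)) as [y [Ey _]].
      { rewrite comp_assoc; exact Hx. }
      destruct (Kk X y) as [z [Ez _]].
      { apply mono_i. rewrite comp_0_r, comp_assoc, <- Egf, <- comp_assoc, Ey,
          comp_assoc, Ea. apply comp_0_l. }
      exists z. split.
      * apply mono_a. rewrite comp_assoc, EkU, <- comp_assoc, Ez. exact Ey.
      * intros z' Ez'. apply mono_k, mono_f.
        rewrite Ez, Ey, comp_assoc, <- EkU, <- comp_assoc, Ez'. reflexivity.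
  - exists Q'', h. split; [|exact AQ''].
    split.
    + rewrite comp_assoc, Eh, <- comp_assoc, Ea. apply comp_0_r.
    + intros X x Hx.
      destruct (Cg X (x ∘ b)) as [z [Ez _]].
      { rewrite <- comp_assoc; exact Hx. }
      destruct (Cc X z) as [w [Ew _]].
      { apply epi_d. rewrite comp_0_l, <- comp_assoc, <- Egf, comp_assoc, Ez,
          <- comp_assoc, Ef. apply comp_0_r. }
      exists w. split.
      * apply epi_b. rewrite <- comp_assoc, Eh, comp_assoc, Ew. exact Ez.
      * intros w' Ew'. apply epi_c, epi_g.
        rewrite Ew, Ez, <- comp_assoc, <- Eh, comp_assoc, Ew'. reflexivity.
Qed.
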